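(* Let $\epsilon$ be a constant with $0<\epsilon<1/3$. The $(1+1)$~IA$^{hyp}$ finds an optimal solution of the instance $P^*_\epsilon$ (with $n$ even) in $O(n^2)$ expected fitness function evaluations.
   Context: Partition problem: a solution $x\in\{0,1\}^n$ assigns job $i$ to machine $M_1$ if $x_i=0$ and to $M_2$ if $x_i=1$; the makespan $f(x)=\max\{\sum_i p_ix_i,\sum_i p_i(1-x_i)\}$ is minimised. The instance $P^*_\epsilon$ has $n$ jobs with $p_1=p_2=\frac13-\frac{\epsilon}{4}$ and $p_i=\frac{1/3+\epsilon/2}{n-2}$ for $3\le i\le n$. The $(1+1)$~IA$^{hyp}$ (minimisation): initialise $x$ uniformly at random and evaluate it. Each iteration: $y:=x$, $F:=\{1,\dots,n\}$; while $F\ne\emptyset$ and $f(y)\ge f(x)$: pick $i\in F$ uniformly at random, remove it from $F$, flip $y_i$, evaluate $f(y)$; then if $f(y)\le f(x)$ set $x:=y$. Asymptotics are as $n\to\infty$. *)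

(* Defs.v *)
From HB Require Import structures.
From mathcomp Require Import all_boot all_order all_algebra.
From mathcomp Require Import reals.
Set Implicit Arguments. Unset Strict Implicit. Unset Printing Implicit Defensive.
Import Order.TTheory GRing.Theory Num.Theory.
Local Open Scope ring_scope.

(* Bit strings of length n: x i = true means job i goes to machine M_2. *)
Definition bits (n : nat) := {ffun 'I_n -> bool}.

Definition makespan (R : realType) (n : nat) (p : 'I_n -> R) (x : bits n) : R :=
  Num.max (\sum_i p i * (x i)%:R) (\sum_i p i * (~~ x i)%:R).

Definition optimal (R : realType) (n : nat) (p : 'I_n -> R) (x : bits n) : bool :=
  [forall z : bits n, makespan p x <= makespan p z].

Definition flip (n : nat) (y : bits n) (i : 'I_n) : bits n :=
  [ffun j => if j == i then ~~ y j else y j].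

(* State right after a fitness evaluation: (x, y, F) where x is the current
   parent, y the point just evaluated, F the set of not-yet-flipped positions
   of the current hypermutation. *)
Definition state (n : nat) := (bits n * bits n * {set 'I_n})%type.

Definition kernel (R : realType) (n : nat) (p : 'I_n -> R) (s s' : state n) : R :=
  let: (x, y, F) := s in
  if (F != set0) && (makespan p x <= makespan p y) then
    (* hypermutation loop continues: flip a fresh random position of F *)
    \sum_(i in F) #|F|%:R^-1 * (s' == (x, flip y i, F :\ i))%:R
  else
    (* loop ends: selection (x := y if f(y) <= f(x)), then new iteration
       starts with y := x, F := {1..n}, and its first flip/evaluation *)
    let x' := if makespan p y <= makespan p x then y else x in
    \sum_i n%:R^-1 * (s' == (x', flip x' i, [set: 'I_n] :\ i))%:R.

(* Distribution of the state after the first evaluation (uniform initial x). *)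
Definition init_dist (R : realType) (n : nat) (s : state n) : R :=
  ((s.1.1 == s.1.2) && (s.2 == set0))%:R * (2 ^ n)%:R^-1.

(* alive k s = Pr[ state after evaluation k+1 is s, and none of the
   evaluations 1..k+1 evaluated an optimal solution ] *)
Fixpoint alive (R : realType) (n : nat) (p : 'I_n -> R) (k : nat) : state n -> R :=
  match k with
  | 0 => fun s => (~~ optimal p s.1.2)%:R * init_dist R s
  | k'.+1 => fun s' =>
      (~~ optimal p s'.1.2)%:R * \sum_(s : state n) alive p k' s * kernel p s s'
  end.

(* surv k = Pr[ T > k ], T = number of evaluations until an optimum is evaluated *)
Definition surv (R : realType) (n : nat) (p : 'I_n -> R) (k : nat) : R :=
  if k is k'.+1 then \sum_(s : state n) alive p k' s else 1.

(* Partial sums of E[T] = sum_{k >= 0} Pr[T > k]. *)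
Definition runtime_partial (R : realType) (n : nat) (p : 'I_n -> R) (m : nat) : R :=
  \sum_(k < m) surv p k.

(* Instance P*_eps (job indices shifted to 0-based). *)
Definition pstar (R : realType) (n : nat) (eps : R) (i : 'I_n) : R :=
  if (i < 2)%N then 1 / 3 - eps / 4 else (1 / 3 + eps / 2) / (n - 2)%:R.

(* Main.v *)
Require Import Defs.
From HB Require Import structures.
From mathcomp Require Import all_boot all_order all_algebra.
From mathcomp Require Import reals.
From mathcomp Require Import zify ring lra.
Set Implicit Arguments. Unset Strict Implicit. Unset Printing Implicit Defensive.
Import Order.TTheory GRing.Theory Num.Theory.
Local Open Scope ring_scope.

Section S.
Variable R : realType.
Variable n : nat.
Variable eps : R.
Local Notation p := (@pstar R n eps).
Local Notation f := (makespan p).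
Definition bb : R := 1/3 - eps/4.
Definition ww : R := (1/3 + eps/2)/(n-2)%:R.
Definition big (i : 'I_n) := (i < 2)%N.
Definition cnt (P : pred 'I_n) : nat := \sum_i (P i : nat).

Lemma sum_pg (g : 'I_n -> bool) : \sum_i p i * (g i)%:R =
  bb * (cnt (fun i => big i && g i))%:R + ww * (cnt (fun i => ~~ big i && g i))%:R.
Proof.
rewrite /cnt !natr_sum !mulr_sumr -big_split; apply eq_bigr => i _.
rewrite /pstar /big /bb /ww; case: (i < 2)%N; case: (g i) => /=;
rewrite ?mulr1 ?mulr0 ?addr0 ?add0r //.
Qed.

Lemma cnt_split (P Q : pred 'I_n) : (cnt (fun i => P i && Q i) + cnt (fun i => P i && ~~ Q i) = cnt P)%N.
Proof. by rewrite /cnt -big_split; apply eq_bigr => i _; case: (P i); case: (Q i). Qed.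

Lemma cnt_all : (cnt big + cnt (fun i => ~~ big i) = n)%N.
Proof.
rewrite /cnt -big_split /= -[RHS]card_ord -sum1_card; apply eq_bigr => i _; by case: big.
Qed.

Lemma sum_lt2 (N : nat) : (\sum_(i < N) ((i < 2)%N : nat) = minn N 2)%N.
Proof.
elim: N => [|N IH]; first by rewrite big_ord0.
by rewrite big_ord_recr /= IH; case: N {IH} => [|[|N]].
Qed.

Lemma cnt_big : (2 <= n)%N -> cnt big = 2%N.
Proof. move=> h; rewrite /cnt /big sum_lt2; lia. Qed.

Lemma cnt_ext (P Q : pred 'I_n) : (forall i, P i = Q i) -> cnt P = cnt Q.
Proof. by move=> h; apply eq_bigr => i _; rewrite h. Qed.

Definition fv (a c : nat) : R :=
  Num.max (bb * a%:R + ww * c%:R) (bb * (2 - a%:R) + ww * ((n-2)%:R - c%:R)).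

Definition nbB (be : bool) (y : bits n) := cnt (fun i => big i && (y i == be)).
Definition nsB (be : bool) (y : bits n) := cnt (fun i => ~~ big i && (y i == be)).

Lemma cnt_compl_R (P Q : pred 'I_n) :
  (cnt (fun i => P i && ~~ Q i))%:R = (cnt P)%:R - (cnt (fun i => P i && Q i))%:R :> R.
Proof. by rewrite -(cnt_split P Q) natrD [X in X - _]addrC addrK. Qed.

Lemma cnt_small : cnt (fun i => ~~ big i) = (n - 2)%N.
Proof.
have h1 := cnt_all; have h2 : cnt big = minn n 2 by rewrite /cnt /big sum_lt2.
rewrite h2 in h1; lia.
Qed.

Lemma cnt_eqT (P : pred 'I_n) (y : bits n) : cnt (fun i => P i && (y i == true)) = cnt (fun i => P i && y i).
Proof. by apply cnt_ext => i; rewrite eqb_id. Qed.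
Lemma cnt_eqF (P : pred 'I_n) (y : bits n) : cnt (fun i => P i && (y i == false)) = cnt (fun i => P i && ~~ y i).
Proof. by apply cnt_ext => i; rewrite eqbF_neg. Qed.

Lemma f_fv (hn : (2 <= n)%N) (be : bool) (y : bits n) : f y = fv (nbB be y) (nsB be y).
Proof.
rewrite /makespan !sum_pg /fv /nbB /nsB.
rewrite !(cnt_compl_R _ (fun i => y i)) cnt_big // cnt_small natrB //.
case: be; first by rewrite !cnt_eqT.
rewrite !cnt_eqF !(cnt_compl_R _ (fun i => y i)) cnt_big // cnt_small natrB // maxC.
congr Num.max; ring.
Qed.

Section Real.
Hypothesis hn : (4 <= n)%N.
Hypothesis he0 : 0 < eps.
Hypothesis he1 : eps < 1/3.
Ltac prep := have := he0; have := he1; move=> ? ?.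

Lemma mR_pos : 0 < (n-2)%:R :> R.
Proof. prep. rewrite ltr0n; lia. Qed.

Lemma ww_m : ww * (n-2)%:R = 1/3 + eps/2.
Proof. prep. rewrite /ww mulrAC -mulrA divff ?mulr1 //; have := mR_pos; rewrite lt0r => /andP[] //. Qed.

Lemma ww_pos : 0 < ww.
Proof. prep. apply: divr_gt0; last exact: mR_pos. lra. Qed.

Lemma fv_ge_half a c : 1/2 <= fv a c.
Proof.
prep.
rewrite /fv le_max; have := ww_m => h.
rewrite !mulrBr h; set X := bb * a%:R; set Y := ww * c%:R.
case: (lerP (1/2) (X + Y)) => // h1; apply/orP; right.
move: h1; rewrite /bb; lra.
Qed.

Lemma fv_opt h0 : (n - 2 = h0.*2)%N -> fv 1 h0 = 1/2.
Proof.
prep.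
move=> hm; have := ww_m; rewrite /fv /bb hm -addnn natrD => h.
have -> : (2 - 1) = 1 :> R by lra.
have -> : ((h0%:R + h0%:R) - h0%:R) = h0%:R :> R by rewrite addrK.
rewrite maxxx; move: h; rewrite mulrDr; lra.
Qed.

Lemma fvB_dec h0 c : (n - 2 = h0.*2)%N -> (h0 < c)%N -> fv 1 c.-1 < fv 1 c.
Proof.
prep.
move=> hm; case: c => [//|c] hc /=; have := ww_pos; have := ww_m.
rewrite /fv hm -addnn -addn1 !natrD.
have : h0%:R <= c%:R :> R by rewrite ler_nat.
set H := h0%:R; set C := c%:R => hh h1 h2.
rewrite lt_max !gt_max; apply/orP; left; apply/andP; split.
  lra.
have : 0 < ww * (C + 1 - (H + H - C)) by apply: mulr_gt0 => //; lra.
lra.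
Qed.

Lemma fvA_val c : (c <= n - 2)%N -> fv 2 c = 2 * bb + ww * c%:R.
Proof.
prep.
move=> hc; have := ww_pos; have := ww_m; rewrite /fv => h1 h2.
have : c%:R <= (n-2)%:R :> R by rewrite ler_nat.
move=> h3.
have : 0 <= ww * c%:R by apply: mulr_ge0; [lra | exact: ler0n].
move=> h4.
rewrite max_l; first by rewrite mulrC.
move: h1 h4; rewrite /bb mulrBr; lra.
Qed.

Lemma fvA_dec c : (1 <= c <= n - 2)%N -> fv 2 c.-1 < fv 2 c.
Proof.
prep.
move=> /andP[h1 h2]; rewrite !fvA_val //; last by lia.
case: c h1 h2 => [//|c] h1 h2 /=.
rewrite -addn1 natrD; have := ww_pos; lra.
Qed.

Lemma window h0 j z k : (n - 2 = h0.*2)%N -> (z <= h0 + j)%N -> (h0 <= z + j)%N ->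
  ww * (h0 + j)%:R < bb -> fv 1 z < fv 2 k.
Proof.
prep.
move=> hm h1 h2 hw; have := ww_pos; have := ww_m; rewrite /fv hm -addnn => e1 e2.
have : z%:R <= (h0 + j)%:R :> R by rewrite ler_nat.
have : (h0 + h0)%:R - z%:R <= (h0 + j)%:R :> R.
  rewrite lerBlDr -natrD ler_nat; lia.
move=> h3 h4.
rewrite gt_max; apply/andP; split; rewrite lt_max; apply/orP; left.
  have : 0 <= k%:R :> R by []. move: hw; rewrite /bb; nra.
have : 0 <= k%:R :> R by []. move: hw; rewrite /bb; nra.
Qed.
End Real.

Section Phi.
Variables (kk kN h0 j : nat).
Definition LL := (h0 - j)%N.
Definition UU := (h0 + j)%N.
Definition AA := (UU + 1 - kk)%N.
Definition BB := (LL + kk + 2)%N.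
Definition c1 : R := (n + 1 - BB)%:R / n%:R.
Definition zz (p q : nat) := (p + kN - q)%N.
Definition succ (u p q : nat) := fv u (zz p q) < fv 2 kk.
Definition Phi (u p q : nat) : R :=
  if succ u p q then 1 else
  let r := (u + p + q)%N in
  if u == 2%N then c1 * ((AA - (n - r))%:R / r%:R)
  else if u == 1%N then (if (zz p q < LL)%N then (n + 1 - BB)%:R / r%:R else 0)
  else 0.

Lemma c1_ge0 : 0 <= c1.
Proof. by rewrite /c1 divr_ge0. Qed.

Lemma Phi_ge0 u p q : 0 <= Phi u p q.
Proof.
rewrite /Phi; case: ifP => // _; case: ifP => _.
  by rewrite mulr_ge0 ?c1_ge0 ?divr_ge0.
by case: ifP => _ //; case: ifP => _ //; rewrite divr_ge0.
Qed.

Lemma aux1 (r a : R) : 2 <= r -> 1 <= a <= r -> a <= 2 + (r - 2) * ((a - 1) / (r - 1)).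
Proof.
move=> hr /andP[ha1 ha2].
have hr1 : r - 1 != 0 by rewrite subr_eq0; apply/eqP => e; move: hr; rewrite -e; lra.
set Y := (a - 1) / (r - 1).
have hY : Y * (r - 1) = a - 1 by rewrite /Y divfK.
have hY1 : Y <= 1 by rewrite /Y ler_pdivrMr ?mul1r; lra.
nra.
Qed.

Lemma div_le (a x y : R) : 0 <= a -> 0 < y -> y <= x -> a / x <= a / y.
Proof.
move=> ha hy hyx; apply: ler_wpM2l => //.
have hx : 0 < x by lra.
by rewrite lef_pV2 ?posrE.
Qed.

Lemma div_le1 (a x : R) : 0 < x -> a <= x -> a / x <= 1.
Proof. by move=> hx hax; rewrite ler_pdivrMr // mul1r. Qed.

Lemma win_succ (he0 : 0 < eps) (he1 : eps < 1/3) (hn : (4 <= n)%N) (hm : (n - 2 = h0.*2)%N)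
  (hj : (j <= h0)%N) (hw : ww * (h0 + j)%:R < bb) p q :
  (LL <= zz p q <= UU)%N -> succ 1 p q.
Proof.
move=> /andP[h1 h2]; rewrite /succ; apply: (window hn he0 he1 kk hm) => //; move: h1 h2; rewrite /LL /UU; lia.
Qed.

Lemma core (he0 : 0 < eps) (he1 : eps < 1/3) (hn : (4 <= n)%N) (hm : (n - 2 = h0.*2)%N)
  (hk : (kk <= h0)%N) (hkN : (kk + kN = n - 2)%N)
  (hj : (j <= h0)%N) (hw : ww * (h0 + j)%:R < bb) u p q :
  (p <= kk)%N -> (q <= kN)%N -> (u <= 2)%N -> ~~ succ u p q -> (0 < u + p + q)%N ->
  (u + p + q)%:R * Phi u p q <=
    u%:R * Phi u.-1 p q + p%:R * Phi u p.-1 q + q%:R * Phi u p q.-1.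
Proof.
move=> hp hq hu hns hr.
have hm' : (n - 2 = h0 + h0)%N by rewrite hm addnn.
have P0 := Phi_ge0.
have rhs0 : 0 <= u%:R * Phi u.-1 p q + p%:R * Phi u p.-1 q + q%:R * Phi u p q.-1.
  by rewrite !addr_ge0 ?mulr_ge0.
have hnE : Phi u p q = (let r := (u + p + q)%N in
  if u == 2%N then c1 * ((AA - (n - r))%:R / r%:R)
  else if u == 1%N then (if (zz p q < LL)%N then (n + 1 - BB)%:R / r%:R else 0)
  else 0) by rewrite /Phi (negbTE hns).
rewrite hnE /=.
have c1le1 : c1 <= 1.
  apply: div_le1; rewrite ?ltr0n ?ler_nat /BB; lia.
case: u hu hns hr hnE rhs0 => [|[|[|u]]] // hu hns hr hnE rhs0 /=.
- by rewrite mulr0.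
-
  case: ifP => hz; last by rewrite mulr0.
  set v := (n + 1 - BB)%:R : R.
  have hpq : (1 <= p + q)%N by move: hz; rewrite /zz /BB /LL; clear -hq hkN hk hj hm'; lia.
  have hv : (n + 1 - BB <= p + q)%N by move: hz; rewrite /zz /BB /LL; clear -hq hkN hk hj hm'; lia.
  have hpq0 : 0 < (p + q)%:R :> R by rewrite ltr0n.
  have vle : v / (p + q)%:R <= 1 by rewrite div_le1 // /v ler_nat.
  have e1 : (1 + p + q)%:R * (v / (1 + p + q)%:R) = v.
    by rewrite mulrC divfK // pnatr_eq0; lia.
  rewrite e1.
  have N2 : (1 <= p)%N -> v / (p + q)%:R <= Phi 1 p.-1 q.
    move=> hp1; rewrite /Phi; case: ifP => // _ /=.
    have -> : (zz p.-1 q < LL)%N by move: hz; rewrite /zz; clear -hp1 hq; lia.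
    by have -> : (1 + p.-1 + q = p + q)%N by clear -hp1; lia.
  have N3 : (1 <= q)%N -> v / (p + q)%:R <= Phi 1 p q.-1.
    move=> hq1; rewrite /Phi; case: ifP => // hs /=.
    have -> : (1 + p + q.-1 = p + q)%N by clear -hq1; lia.
    case: ifP => // hz2.
    exfalso; move/negbT: hs; apply/negP/negPn.
    apply: (win_succ he0 he1 hn hm hj hw); move/negbT: hz2; move: hz; rewrite /zz /LL /UU; clear -hq hq1 hj; lia.
  have A2 : p%:R * (v / (p + q)%:R) <= p%:R * Phi 1 p.-1 q.
    have [->|hp0] := eqVneq p 0%N; first by rewrite !mul0r.
    by apply: ler_wpM2l => //; apply: N2; rewrite lt0n.
  have A3 : q%:R * (v / (p + q)%:R) <= q%:R * Phi 1 p q.-1.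
    have [->|hq0] := eqVneq q 0%N; first by rewrite !mul0r.
    by apply: ler_wpM2l => //; apply: N3; rewrite lt0n.
  have e2 : p%:R * (v / (p + q)%:R) + q%:R * (v / (p + q)%:R) = v.
    by rewrite -mulrDl -natrD mulrC divfK // gt_eqF.
  have := P0 0%N p q; rewrite mul1r; lra.
-
  have hrn : (2 + p + q <= n)%N by clear -hp hq hkN hn; lia.
  case ha: (AA - (n - (2 + p + q)))%N => [|a]; first by rewrite mul0r mulr0 mulr0.
  have har : (a.+1 <= 2 + p + q)%N.
    by move: ha; rewrite /AA /UU; clear -hrn hk hj hm' hn; lia.
  have hzu : (zz p q <= UU)%N.
    by move: ha; rewrite /zz /AA /UU; clear -hrn hk hj hm' hn hp hq hkN; lia.
  have er1 : (1 <= p)%N -> (2 + p.-1 + q = (2 + p + q) - 1)%N by clear; lia.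
  have er2 : (1 <= q)%N -> (2 + p + q.-1 = (2 + p + q) - 1)%N by clear; lia.
  have ea : (AA - (n - ((2 + p + q) - 1)) = a)%N by move: ha; clear -hrn; lia.
  have hr2 : (2 <= 2 + p + q)%N by clear; lia.
  have er0 : (1 + p + q = (2 + p + q) - 1)%N by clear; lia.
  have hr1n : (1 <= 2 + p + q - 1 <= n)%N by clear -hrn; lia.
  move: hrn ha har er0 er1 er2 ea hr2 hr1n.
  move hrdef : (2 + p + q)%N => r hrn ha har er0 er1 er2 ea hr2 hr1n.
  have hr0 : 0 < r%:R :> R by rewrite ltr0n; clear -hr2; lia.
  have hr1 : 0 < (r - 1)%:R :> R by rewrite ltr0n; clear -hr2; lia.
  have e1 : r%:R * (c1 * (a.+1%:R / r%:R)) = c1 * a.+1%:R.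
    by rewrite mulrCA; congr (c1 * _); rewrite mulrC divfK ?gt_eqF.
  rewrite e1.
  set V := c1 * (a%:R / (r - 1)%:R).
  have N1 : c1 <= Phi 1 p q.
    rewrite /Phi; case: ifP => // hs /=.
    case: ifP => hz.
      rewrite /c1 er0; apply: div_le; rewrite ?ltr0n ?ler_nat //; clear -hr1n; lia.
    exfalso; move/negbT: hs; apply/negP/negPn.
    apply: (win_succ he0 he1 hn hm hj hw); move/negbT: hz; rewrite -leqNgt => hz.
    by rewrite hz hzu.
  have Vle1 : V <= 1.
    have : a%:R / (r - 1)%:R <= 1 :> R by rewrite div_le1 // ler_nat; clear -har; lia.
    have : 0 <= a%:R / (r - 1)%:R :> R by rewrite divr_ge0.
    have := c1_ge0.
    rewrite /V; nra.
  have N2 : (1 <= p)%N -> V <= Phi 2 p.-1 q.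
    by move=> hp1; rewrite /Phi; case: ifP => // _ /=; rewrite er1 // ea.
  have N3 : (1 <= q)%N -> V <= Phi 2 p q.-1.
    by move=> hq1; rewrite /Phi; case: ifP => // _ /=; rewrite er2 // ea.
  have A2 : p%:R * V <= p%:R * Phi 2 p.-1 q.
    have [->|hp0] := eqVneq p 0%N; first by rewrite !mul0r.
    by apply: ler_wpM2l => //; apply: N2; rewrite lt0n.
  have A3 : q%:R * V <= q%:R * Phi 2 p q.-1.
    have [->|hq0] := eqVneq q 0%N; first by rewrite !mul0r.
    by apply: ler_wpM2l => //; apply: N3; rewrite lt0n.
  have key : c1 * a.+1%:R <= c1 * (2 + (r%:R - 2) * (a%:R / (r - 1)%:R)).
    apply: ler_wpM2l; first exact: c1_ge0.
    have := @aux1 r%:R a.+1%:R.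
    have -> : a.+1%:R - 1 = a%:R :> R by rewrite -addn1 natrD addrK.
    have -> : r%:R - 1 = (r - 1)%:R :> R by rewrite natrB //; clear -hr2; lia.
    apply.
      by rewrite (ler_nat R 2 r).
    by apply/andP; split; [rewrite ler1n | rewrite ler_nat].
  have e3 : c1 * (2 + (r%:R - 2) * (a%:R / (r - 1)%:R)) = 2%:R * c1 + p%:R * V + q%:R * V.
    rewrite /V -hrdef !natrD; ring.
  have N1' : 2%:R * c1 <= 2%:R * Phi 1 p q by apply: ler_wpM2l.
  lra.
Qed.
End Phi.
Fixpoint hr (k : nat) (x y : bits n) (F : {set 'I_n}) : R :=
  if (F != set0) && (f x <= f y) then
    (if k is k'.+1 then \sum_(i in F) #|F|%:R^-1 * hr k' x (flip y i) (F :\ i) else 0)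
  else ((f y < f x)%R)%:R.

Lemma hr_end k x y F : ~~ ((F != set0) && (f x <= f y)) -> hr k x y F = ((f y < f x)%R)%:R.
Proof. by move=> h; case: k => [|k] /=; rewrite (negbTE h). Qed.

Lemma b01 (b : bool) : 0 <= ((b : nat)%:R : R) <= 1.
Proof. by case: b => /=; rewrite ?ler01 ?lexx. Qed.

Lemma hr_bounds k x y F : 0 <= hr k x y F <= 1.
Proof.
elim: k y F => [|k IH] y F /=.
  by case: ifP => _; [rewrite lexx ler01 | apply: b01].
case: ifP => [/andP[hF _]|_]; last by apply: b01.
have hc : 0 < #|F|%:R :> R by rewrite ltr0n card_gt0.
apply/andP; split.
  by apply: sumr_ge0 => i _; rewrite mulr_ge0 ?invr_ge0 ?ler0n //; case/andP: (IH (flip y i) (F :\ i)).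
apply: le_trans (_ : \sum_(i in F) #|F|%:R^-1 <= 1).
  apply: ler_sum => i _; rewrite -[X in _ <= X]mulr1; apply: ler_wpM2l; first by rewrite invr_ge0 ler0n.
  by case/andP: (IH (flip y i) (F :\ i)).
by rewrite sumr_const -[_ *+ #|F|]mulr_natr mulVf ?gt_eqF.
Qed.

Lemma hr_ge0 k x y F : 0 <= hr k x y F.
Proof. by case/andP: (hr_bounds k x y F). Qed.
Lemma hr_le1 k x y F : hr k x y F <= 1.
Proof. by case/andP: (hr_bounds k x y F). Qed.

Lemma hr_unfold x y F : F != set0 -> f x <= f y ->
  hr #|F| x y F = \sum_(i in F) #|F|%:R^-1 * hr #|F :\ i| x (flip y i) (F :\ i).
Proof.
move=> hF hxy.
have e : #|F| = (#|F|.-1).+1 by rewrite prednK // card_gt0.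
have -> : hr #|F| x y F = hr (#|F|.-1).+1 x y F by rewrite -e.
rewrite /= hF hxy /=; apply: eq_bigr => i hi.
by rewrite (cardsD1 i F) hi.
Qed.

Lemma card_cnt (F : {set 'I_n}) : #|F| = cnt (fun i => i \in F).
Proof. by rewrite /cnt -sum1_card big_mkcond /=; apply eq_bigr => i _; case: (i \in F). Qed.

Lemma cnt_pred1 (P : pred 'I_n) i : cnt (fun j => (j == i) && P j) = P i.
Proof.
rewrite /cnt (bigD1 i) //= eqxx big1 ?addn0 // => j /negbTE -> //.
Qed.

Lemma cnt_rm (P : pred 'I_n) (F : {set 'I_n}) i : i \in F ->
  cnt (fun j => (j \in F) && P j) = (cnt (fun j => (j \in F :\ i) && P j) + P i)%N.
Proof.
move=> hi; rewrite -cnt_pred1 /cnt -big_split; apply: eq_bigr => j _ /=.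
rewrite in_setD1; case: (eqVneq j i) => [->|_] /=; first by rewrite hi.
by rewrite addn0.
Qed.

Lemma cnt_eq2 (P Q P' Q' : pred 'I_n) : (forall i, P i + Q i = P' i + Q' i)%N ->
  (cnt P + cnt Q = cnt P' + cnt Q')%N.
Proof. by move=> h; rewrite /cnt -!big_split; apply eq_bigr => i _; apply: h. Qed.

Lemma cnt_le (P Q : pred 'I_n) : (forall i, P i -> Q i) -> (cnt P <= cnt Q)%N.
Proof. by move=> h; apply: leq_sum => i _; case: (P i) (h i) => // ->. Qed.

Lemma sum_ind_cnt (F : {set 'I_n}) (P : pred 'I_n) (c : R) :
  \sum_(i in F) (P i)%:R * c = (cnt (fun i => (i \in F) && P i))%:R * c.
Proof.
rewrite /cnt natr_sum mulr_suml big_mkcond /=; apply: eq_bigr => i _.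
by case: (i \in F) => /=; rewrite ?mul0r.
Qed.

Section Cnt.
Variables (x : bits n) (be : bool).
Definition uF (F : {set 'I_n}) := cnt (fun i => (i \in F) && big i).
Definition pF (F : {set 'I_n}) := cnt (fun i => (i \in F) && (~~ big i && (x i == be))).
Definition qF (F : {set 'I_n}) := cnt (fun i => (i \in F) && (~~ big i && (x i != be))).
Definition kNx := cnt (fun i => ~~ big i && (x i != be)).
Definition yF (F : {set 'I_n}) : bits n := [ffun i => if i \in F then x i else ~~ x i].

Lemma card_upq (F : {set 'I_n}) : #|F| = (uF F + pF F + qF F)%N.
Proof.
rewrite card_cnt /uF /pF /qF /cnt -!big_split; apply: eq_bigr => i _ /=.
by case: (i \in F); case: (big i); case: (x i == be).
Qed.

Lemma kk_kN : (nsB be x + kNx = n - 2)%N.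
Proof. by rewrite /nsB /kNx (cnt_split (fun i => ~~ big i) (fun i => x i == be)) cnt_small. Qed.

Lemma nb_yF (hx : forall i, big i -> x i = be) F : nbB be (yF F) = uF F.
Proof.
apply: cnt_ext => i; rewrite ffunE; case hb: (big i); last by rewrite andbF.
by rewrite (hx i hb) /= andbT; case: (i \in F); case: be.
Qed.

Lemma ns_yF F : (nsB be (yF F) + qF F = pF F + kNx)%N.
Proof.
apply: cnt_eq2 => i; rewrite ffunE.
by case: (i \in F); case: (big i); case: (x i); case: be.
Qed.

Lemma pF_le F : (pF F <= nsB be x)%N.
Proof. by apply: cnt_le => i /andP[]. Qed.
Lemma qF_le F : (qF F <= kNx)%N.
Proof. by apply: cnt_le => i /andP[]. Qed.
Lemma uF_le (hn : (2 <= n)%N) F : (uF F <= 2)%N.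
Proof. by rewrite -(cnt_big hn); apply: cnt_le => i /andP[]. Qed.

Lemma yF_rm (F : {set 'I_n}) i : i \in F -> yF (F :\ i) = flip (yF F) i.
Proof.
move=> hi; apply/ffunP => j; rewrite !ffunE in_setD1.
by case: (eqVneq j i) => [->|] //=; rewrite hi.
Qed.

Lemma yF_T : yF setT = x.
Proof. by apply/ffunP => j; rewrite ffunE in_setT. Qed.

Lemma uF_rm (F : {set 'I_n}) i : i \in F -> uF F = (uF (F :\ i) + big i)%N.
Proof. exact: cnt_rm. Qed.
Lemma pF_rm (F : {set 'I_n}) i : i \in F -> pF F = (pF (F :\ i) + (~~ big i && (x i == be)))%N.
Proof. exact: cnt_rm. Qed.
Lemma qF_rm (F : {set 'I_n}) i : i \in F -> qF F = (qF (F :\ i) + (~~ big i && (x i != be)))%N.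
Proof. exact: cnt_rm. Qed.

Lemma f_yF (hn : (2 <= n)%N) (hx : forall i, big i -> x i = be) F :
  f (yF F) = fv (uF F) (zz kNx (pF F) (qF F)).
Proof.
rewrite (f_fv hn be) nb_yF //; congr fv; rewrite /zz.
have := ns_yF F; lia.
Qed.

Lemma f_x (hn : (2 <= n)%N) (hx : forall i, big i -> x i = be) : f x = fv 2 (nsB be x).
Proof.
rewrite (f_fv hn be); congr fv; rewrite -(cnt_big hn); apply: cnt_ext => i.
by case hb: (big i) => //=; rewrite (hx i hb) eqxx.
Qed.
End Cnt.

Lemma phi_le_hr (he0 : 0 < eps) (he1 : eps < 1/3) (hn : (4 <= n)%N) h0 j
  (hm : (n - 2 = h0.*2)%N) (hj : (j <= h0)%N) (hw : ww * (h0 + j)%:R < bb)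
  (x : bits n) (be : bool) (hx : forall i, big i -> x i = be) (hk : (nsB be x <= h0)%N) :
  forall r (F : {set 'I_n}), #|F| = r ->
  Phi (nsB be x) (kNx x be) h0 j (uF F) (pF x be F) (qF x be F) <= hr r x (yF x F) F.
Proof.

have hn2 : (2 <= n)%N by clear -hn; lia.
move=> r; elim: r => [|r IH] F hF.
all: have sE : succ (nsB be x) (kNx x be) (uF F) (pF x be F) (qF x be F) = (f (yF x F) < f x)
       by rewrite /succ -f_yF // -f_x.
all: case hs: (succ (nsB be x) (kNx x be) (uF F) (pF x be F) (qF x be F)).
- have hlt : f (yF x F) < f x by rewrite -sE.
  by rewrite /Phi hs hr_end ?hlt // leNgt hlt andbF.
- move/cards0_eq: hF => hF0; subst F.
  rewrite /Phi hs.
  have -> : uF set0 = 0%N by rewrite /uF /cnt big1 // => i _; rewrite in_set0.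
  by apply: le_trans (hr_ge0 0 x (yF x set0) set0); rewrite /= lexx.
- have hlt : f (yF x F) < f x by rewrite -sE.
  by rewrite /Phi hs hr_end ?hlt // leNgt hlt andbF.
have hle : f x <= f (yF x F) by rewrite leNgt -sE hs.
have hF0 : F != set0 by rewrite -card_gt0 hF.
rewrite /= hF0 hle /=.
set u := uF F; set p := pF x be F; set q := qF x be F.
set kk := nsB be x; set kN := kNx x be.
apply: le_trans (_ : \sum_(i in F) #|F|%:R^-1 * Phi kk kN h0 j (uF (F :\ i)) (pF x be (F :\ i)) (qF x be (F :\ i)) <= _); last first.
  apply: ler_sum => i hi; apply: ler_wpM2l; first by rewrite invr_ge0 ler0n.
  rewrite -yF_rm //; apply: IH.
  by move: hF; rewrite (cardsD1 i F) hi add1n => -[].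
rewrite -mulr_sumr.
have -> : \sum_(i in F) Phi kk kN h0 j (uF (F :\ i)) (pF x be (F :\ i)) (qF x be (F :\ i)) =
   \sum_(i in F) ((big i)%:R * Phi kk kN h0 j u.-1 p q
      + (~~ big i && (x i == be))%:R * Phi kk kN h0 j u p.-1 q
      + (~~ big i && (x i != be))%:R * Phi kk kN h0 j u p q.-1).
  apply: eq_bigr => i hi.
  rewrite /u /p /q (uF_rm hi) (pF_rm x be hi) (qF_rm x be hi).
  by case: (big i); case: (x i == be) => /=; rewrite !addn0 ?addn1 /= ?mul1r ?mul0r ?addr0 ?add0r.
rewrite !big_split /= !sum_ind_cnt.
have hc := core he0 he1 hn hm hk (kk_kN x be) hj hw (pF_le x be F) (qF_le x be F) (uF_le hn2 F) (negbT hs).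
rewrite -card_upq hF in hc.
have hr0 : r.+1%:R != 0 :> R by rewrite pnatr_eq0.
rewrite -[X in X <= _](mulKf hr0) hF; apply: ler_wpM2l; first by rewrite invr_ge0 ler0n.
by apply: hc.
Qed.

Lemma sum_ind_cnt1 (F : {set 'I_n}) (P : pred 'I_n) :
  \sum_(i in F) ((P i)%:R : R) = (cnt (fun i => (i \in F) && P i))%:R.
Proof. by rewrite -[RHS]mulr1 -sum_ind_cnt; apply: eq_bigr => i _; rewrite mulr1. Qed.

Lemma cnt_pos (P : pred 'I_n) i : P i -> (0 < cnt P)%N.
Proof. by move=> hP; apply: leq_trans (cnt_le (P := fun j => (j == i) && P j) _); [rewrite cnt_pred1 hP | move=> j /andP[]]. Qed.

Lemma cnt_pred0 : cnt (fun _ => false) = 0%N.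
Proof. by rewrite /cnt big1. Qed.

Lemma nb_compl (hn : (2 <= n)%N) (y : bits n) : (nbB true y + nbB false y = 2)%N.
Proof.
rewrite -(cnt_big hn) -[cnt big]addn0 -cnt_pred0; apply: cnt_eq2 => i.
by case: (big i); case: (y i).
Qed.

Lemma ns_compl (y : bits n) : (nsB true y + nsB false y = n - 2)%N.
Proof.
rewrite -cnt_small -[cnt _]addn0 -cnt_pred0; apply: cnt_eq2 => i.
by case: (big i); case: (y i).
Qed.

Lemma hx_of (hn : (2 <= n)%N) (x : bits n) be : nbB be x = 2%N -> forall i, big i -> x i = be.
Proof.
move=> h i hb; apply/eqP; apply/negPn/negP => hne.
have := cnt_split big (fun i => x i == be); rewrite cnt_big // -/(nbB be x) h.
have := @cnt_pos (fun i => big i && ~~ (x i == be)) i; rewrite hb hne => /(_ isT).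
lia.
Qed.

Lemma nb_flip (x : bits n) be i : ~~ big i -> nbB be (flip x i) = nbB be x.
Proof.
move=> hi; apply: cnt_ext => j; rewrite ffunE; case: (eqVneq j i) => [->|] //.
by rewrite (negbTE hi).
Qed.

Lemma ns_flip (x : bits n) be i : ~~ big i -> x i = be -> (nsB be (flip x i)).+1 = nsB be x.
Proof.
move=> hi hxi; have e : cnt (fun j => (j == i) && true) = 1%N by rewrite cnt_pred1.
rewrite -addn1 -[1%N]e -[nsB be x]addn0 -cnt_pred0.
apply: cnt_eq2 => j; rewrite ffunE; case: (eqVneq j i) => [->|] /=.
  by rewrite hi hxi; case: be {hxi}.
by rewrite !addn0.
Qed.

Lemma good_flips (hn : (4 <= n)%N) h0 (hm : (n - 2 = h0.*2)%N) (x : bits n) be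
  (hgood : forall i, ~~ big i -> x i = be -> f (flip x i) < f x) (hcnt : (h0 < nsB be x)%N) :
  1/2 <= hr #|[set: 'I_n]| x x setT.
Proof.
have hT : [set: 'I_n] != set0 by apply/set0Pn; exists (Ordinal (leq_trans (isT : 0 < 4)%N hn)); rewrite in_setT.
rewrite hr_unfold //.
apply: le_trans (_ : \sum_(i in [set: 'I_n]) #|[set: 'I_n]|%:R^-1 * (~~ big i && (x i == be))%:R <= _).
  rewrite -mulr_sumr sum_ind_cnt1 cardsT card_ord.
  have -> : cnt (fun i => (i \in [set: 'I_n]) && (~~ big i && (x i == be))) = nsB be x.
    by apply: cnt_ext => i; rewrite in_setT.
  have hn0 : 0 < n%:R :> R by rewrite ltr0n; lia.
  rewrite ler_pdivlMl //.
  have : (n <= (nsB be x).*2)%N by lia.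
  rewrite -(ler_nat R) -muln2 natrM => h; lra.
apply: ler_sum => i _; apply: ler_wpM2l; first by rewrite invr_ge0 ler0n.
case hb: (~~ big i && (x i == be)); last exact: hr_ge0.
move/andP: hb => [hb /eqP hxi].
rewrite hr_end ?(hgood i hb hxi) //.
by rewrite leNgt (hgood i hb hxi) andbF.
Qed.

Lemma phi_start (hn : (4 <= n)%N) Qn (hQ : (2 <= Qn)%N) h0 (hm : (n - 2 = h0.*2)%N)
  kk kN (hk : (kk <= h0)%N) (hkN : (kk + kN = n - 2)%N) :
  (4 * Qn ^ 2)%:R^-1 <= Phi kk kN h0 ((n - 2) %/ Qn) 2 kk kN.
Proof.
set j := ((n - 2) %/ Qn)%N.
have hm' : (n - 2 = h0 + h0)%N by rewrite hm addnn.
have jQ : (j * Qn <= n - 2)%N by apply: leq_trunc_div.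
have jQ2 : (n - 2 < j.+1 * Qn)%N by apply: ltn_ceil; lia.
have hj2 : (j * 2 <= j * Qn)%N by rewrite leq_mul2l hQ orbT.
have hjh : (j <= h0)%N.
  have : (j * 2 <= n - 2)%N by apply: leq_trans hj2 jQ.
  lia.
have hns : succ kk kN 2 kk kN = false.
  by rewrite /succ /zz (_ : (kk + kN - kN = kk)%N) ?ltxx //; lia.
rewrite /Phi hns /=.
have -> : (2 + kk + kN = n)%N by lia.
have -> : (n - n = 0)%N by lia.
rewrite subn0.

have hA : (j.+1 <= AA kk h0 j)%N by rewrite /AA /UU; lia.
have hB : (j.+1 <= n + 1 - BB kk h0 j)%N by rewrite /BB /LL; lia.
have hnQ : (n <= j.+1 * (2 * Qn))%N.
  have : (j.+1 * (2 * Qn) = 2 * (j.+1 * Qn))%N by rewrite mulnCA.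
  lia.
have hn0 : 0 < n%:R :> R by rewrite ltr0n; lia.
have hQ0 : 0 < (2 * Qn)%:R :> R by rewrite ltr0n; lia.
pose X := j.+1%:R / n%:R : R.
have hX : (2 * Qn)%:R^-1 <= X.
  rewrite /X ler_pdivlMr // mulrC -/(_ / _) ler_pdivrMr //.
  by rewrite -natrM ler_nat.
have hX0 : 0 <= (2 * Qn)%:R^-1 :> R by rewrite invr_ge0 ler0n.
have h1 : X <= c1 kk h0 j.
  rewrite /c1 /X; apply: ler_wpM2r; first by rewrite invr_ge0 ler0n.
  by rewrite ler_nat.
have h2 : X <= (AA kk h0 j)%:R / n%:R.
  rewrite /X; apply: ler_wpM2r; first by rewrite invr_ge0 ler0n.
  by rewrite ler_nat.
have -> : (4 * Qn ^ 2)%:R^-1 = (2 * Qn)%:R^-1 * (2 * Qn)%:R^-1 :> R.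
  by rewrite -invfM -natrM; congr (_%:R^-1); rewrite mulnACA.
apply: ler_pM => //; apply: le_trans hX _; [exact: h1 | exact: h2].
Qed.

Lemma j_le Qn (hQ : (2 <= Qn)%N) h0 (hm : (n - 2 = h0.*2)%N) : ((n - 2) %/ Qn <= h0)%N.
Proof.
set j := ((n - 2) %/ Qn)%N.
have jQ : (j * Qn <= n - 2)%N by apply: leq_trunc_div.
have hj2 : (j * 2 <= j * Qn)%N by rewrite leq_mul2l hQ orbT.
have : (j * 2 <= n - 2)%N by apply: leq_trans hj2 jQ.
rewrite hm -addnn; lia.
Qed.

Lemma hw_ok (he0 : 0 < eps) (he1 : eps < 1/3) (hn : (4 <= n)%N) Qn (hQ : (2 <= Qn)%N)
  (hQw : (1/3 + eps/2) / Qn%:R < 1/6 - eps/2) h0 (hm : (n - 2 = h0.*2)%N) :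
  ww * (h0 + (n - 2) %/ Qn)%:R < bb.
Proof.
set j := ((n - 2) %/ Qn)%N.
have jQ : (j * Qn <= n - 2)%N by apply: leq_trunc_div.
have hwm := ww_m hn he0 he1.
have hw0 := ww_pos hn he0 he1.
have e1 : ww * h0%:R * 2 = 1/3 + eps/2.
  by rewrite -hwm hm -muln2 natrM mulrA.
have hQ0 : 0 < Qn%:R :> R by rewrite ltr0n; lia.
have e2 : ww * j%:R * Qn%:R <= 1/3 + eps/2.
  rewrite -hwm -mulrA -natrM; apply: ler_wpM2l; first lra.
  by rewrite ler_nat.
have e3 : ww * j%:R <= (1/3 + eps/2) / Qn%:R by rewrite ler_pdivlMr.
rewrite natrD mulrDr /bb; lra.
Qed.

Lemma f_flip (hn2 : (2 <= n)%N) (x : bits n) be i : ~~ big i -> x i = be ->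
  f (flip x i) = fv (nbB be x) (nsB be x).-1.
Proof.
move=> hb hxi; rewrite (f_fv hn2 be) nb_flip //; congr fv.
by rewrite -(ns_flip hb hxi).
Qed.

Lemma success (he0 : 0 < eps) (he1 : eps < 1/3) (hn : (4 <= n)%N) (hev : ~~ odd n)
  Qn (hQ : (2 <= Qn)%N) (hQw : (1/3 + eps/2) / Qn%:R < 1/6 - eps/2) (x : bits n) :
  ~~ optimal (@pstar R n eps) x -> (4 * Qn ^ 2)%:R^-1 <= hr #|[set: 'I_n]| x x setT.
Proof.
move=> hnopt.
have hn2 : (2 <= n)%N by lia.
have e : n = (n./2 + n./2)%N by rewrite addnn halfK (negbTE hev) subn0.
set h0 := (n./2 - 1)%N.
have hm : (n - 2 = h0.*2)%N by rewrite -addnn /h0; lia.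
set j := ((n - 2) %/ Qn)%N.
have hj : (j <= h0)%N by apply: j_le.
have hw : ww * (h0 + j)%:R < bb by apply: hw_ok.
have chalf : (4 * Qn ^ 2)%:R^-1 <= 1/2 :> R.
  have : (1 <= Qn ^ 2)%N by rewrite expn_gt0; lia.
  move=> hq2.
  rewrite mul1r lef_pV2 ?posrE ?ltr0n ?ler_nat //; lia.
have caseB : forall be, nbB be x = 1%N -> (h0 < nsB be x)%N ->
    (4 * Qn ^ 2)%:R^-1 <= hr #|[set: 'I_n]| x x setT.
  move=> be h1 h2; apply: le_trans chalf _; apply: (good_flips hn hm (be := be)) => // i hb hxi.
  rewrite (f_flip hn2 hb hxi) (f_fv hn2 be x) h1; apply: (fvB_dec hn he0 he1 hm h2).
have caseA : forall be, (forall i, big i -> x i = be) ->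
    (4 * Qn ^ 2)%:R^-1 <= hr #|[set: 'I_n]| x x setT.
  move=> be hx.
  have hnb : nbB be x = 2%N.
    rewrite -(cnt_big hn2); apply: cnt_ext => i; case hb: (big i) => //=.
    by rewrite (hx i hb) eqxx.
  case: (ltnP h0 (nsB be x)) => hk.
    apply: le_trans chalf _; apply: (good_flips hn hm (be := be)) => // i hb hxi.
    rewrite (f_flip hn2 hb hxi) (f_fv hn2 be x) hnb; apply: (fvA_dec hn he0 he1).
    by have := ns_compl x; have := pF_le x be setT; lia.
  have := phi_le_hr he0 he1 hn hm hj hw hx hk (erefl #|[set: 'I_n]|).
  rewrite yF_T.
  have -> : uF [set: 'I_n] = 2%N.
    by rewrite -(cnt_big hn2); apply: cnt_ext => i; rewrite in_setT.
  have -> : pF x be [set: 'I_n] = nsB be x.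
    by apply: cnt_ext => i; rewrite in_setT.
  have -> : qF x be [set: 'I_n] = kNx x be.
    by apply: cnt_ext => i; rewrite in_setT.
  apply: le_trans; apply: phi_start => //.
  exact: kk_kN.
have hnb := nb_compl hn2 x.
have hns := ns_compl x.
case hb1: (nbB true x) => [|[|[|b']]].
- apply: (caseA false); apply: hx_of => //; lia.
- have hb2 : nbB false x = 1%N by lia.
  case: (ltngtP h0 (nsB true x)) => hc.
  + exact: (caseB true).
  + apply: (caseB false) => //; lia.
  + exfalso; move/negP: hnopt; apply; apply/forallP => z.
    rewrite (f_fv hn2 true x) hb1 -hc (fv_opt hn he0 he1 hm) (f_fv hn2 true z).
    exact: (fv_ge_half hn he0 he1).
- by apply: (caseA true); apply: hx_of.
- lia.
Qed.

Definition vals : seq R := undup [seq f z | z : bits n].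
Definition Vv (x : bits n) : nat := count (fun v => v < f x) vals.

Lemma V_lt (x y : bits n) : f y < f x -> (Vv y < Vv x)%N.
Proof.
move=> hyx; rewrite /Vv.
have hin : f y \in vals by rewrite /vals mem_undup; apply: map_f; rewrite mem_enum.
have h1 : (0 < count (pred1 (f y)) vals)%N by rewrite -has_count; apply/hasP; exists (f y) => //=.
have h2 := count_predUI (fun v => v < f y) (pred1 (f y)) vals.
have h3 : count (predI (fun v => (v < f y)%R) (pred1 (f y))) vals = 0%N.
  by apply/eqP; rewrite -leqn0 -(count_pred0 vals); apply: (@sub_count R) => v /= /andP[h /eqP e]; move: h; rewrite e ltxx.
have h4 : (count (predU (fun v => (v < f y)%R) (pred1 (f y))) vals <= count (fun v => (v < f x)%R) vals)%N.
  by apply: (@sub_count R) => v /= /orP[h|/eqP ->] //; apply: lt_trans h hyx.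
apply: leq_trans h4; rewrite -[X in (_ < X)%N]addn0 -h3 h2 -addn1.
by apply: leq_add.
Qed.

Lemma V_bound (hn2 : (2 <= n)%N) (x : bits n) : (Vv x <= 3 * (n - 1))%N.
Proof.
apply: leq_trans (count_size _ _) _.
have -> : (3 * (n - 1) = size [seq fv a c | a <- iota 0 3, c <- iota 0 (n - 1)])%N.
  by rewrite size_allpairs !size_iota.
apply: uniq_leq_size; first exact: undup_uniq.
move=> v; rewrite mem_undup => /mapP [z _ ->].
rewrite (f_fv hn2 true z); apply: allpairs_f; rewrite mem_iota /=.
  by have := nb_compl hn2 z; lia.
by have := ns_compl z; lia.
Qed.

Lemma sum_delta (I : finType) (P : pred I) (c : I -> R) (t : I -> state n) (G : state n -> R) :
  \sum_(s' : state n) (\sum_(i | P i) c i * (s' == t i)%:R) * G s' = \sum_(i | P i) c i * G (t i).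
Proof.
under eq_bigr do rewrite mulr_suml.
rewrite exchange_big; apply: eq_bigr => i _.
rewrite (bigD1 (t i)) //= eqxx mulr1 big1 ?addr0 // => s' /negbTE ->.
by rewrite mulr0 mul0r.
Qed.

Definition Acoef (Qn : nat) : R := (4 * Qn ^ 2 * n)%:R.
Definition gg (Qn : nat) (s : state n) : R :=
  let: (x, y, F) := s in Acoef Qn * ((Vv x)%:R + 1 - hr #|F| x y F) + #|F|%:R.

Lemma drift (he0 : 0 < eps) (he1 : eps < 1/3) (hn : (4 <= n)%N) (hev : ~~ odd n)
  Qn (hQ : (2 <= Qn)%N) (hQw : (1/3 + eps/2) / Qn%:R < 1/6 - eps/2) (x y : bits n) F :
  ~~ optimal p x -> ~~ optimal p y ->
  \sum_(s' : state n) kernel p (x, y, F) s' * gg Qn s' <= gg Qn (x, y, F) - 1.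
Proof.
move=> hox hoy.
rewrite /kernel /=; case hc: ((F != set0) && (f x <= f y)).
  case/andP: hc => hF hle.
  rewrite sum_delta /gg hr_unfold //.
  set N := #|F|; set A := Acoef Qn; set V := (Vv x)%:R.
  have hN0 : N%:R != 0 :> R by rewrite pnatr_eq0 -lt0n card_gt0.
  have e : forall i, i \in F -> N%:R^-1 * (A * (V + 1 - hr #|F :\ i| x (flip y i) (F :\ i)) + #|F :\ i|%:R)
     = N%:R^-1 * (A * (V + 1) + (N%:R - 1)) - A * (N%:R^-1 * hr #|F :\ i| x (flip y i) (F :\ i)).
    move=> i hi; have -> : #|F :\ i|%:R = N%:R - 1 :> R.
      by rewrite /N (cardsD1 i F) hi natrD /=; ring.
    ring.
  rewrite (eq_bigr _ e) sumrB sumr_const -mulr_sumr.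
  have -> : (N%:R^-1 * (A * (V + 1) + (N%:R - 1))) *+ #|F| = A * (V + 1) + (N%:R - 1).
    by rewrite -mulr_natr -/N mulrAC mulVf // mul1r.
  rewrite -!mulr_sumr le_eqVlt; apply/orP; left; apply/eqP; ring.
have hend := hc.
have hn2 : (2 <= n)%N by lia.
rewrite sum_delta /gg.
set x' := if f y <= f x then y else x.
have hox' : ~~ optimal p x' by rewrite /x'; case: ifP.
have hT : [set: 'I_n] != set0 by apply/set0Pn; exists (Ordinal (leq_trans (isT : 0 < 4)%N hn)); rewrite in_setT.
have hsucc := success he0 he1 hn hev hQ hQw hox'.
have hU := hr_unfold hT (lexx (f x')).
rewrite cardsT card_ord in hU.
have hU' : hr n x' x' [set: 'I_n] = \sum_i n%:R^-1 * hr #|[set: 'I_n] :\ i| x' (flip x' i) ([set: 'I_n] :\ i).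
  by rewrite hU; apply: eq_bigl => i; rewrite in_setT.
rewrite cardsT card_ord in hsucc.
set A := Acoef Qn.
have hn0 : n%:R != 0 :> R by rewrite pnatr_eq0; lia.
have e : forall i : 'I_n, n%:R^-1 * (A * ((Vv x')%:R + 1 - hr #|[set: 'I_n] :\ i| x' (flip x' i) ([set: 'I_n] :\ i)) + #|[set: 'I_n] :\ i|%:R)
   = n%:R^-1 * (A * ((Vv x')%:R + 1) + (n%:R - 1)) - A * (n%:R^-1 * hr #|[set: 'I_n] :\ i| x' (flip x' i) ([set: 'I_n] :\ i)).
  move=> i; have -> : #|[set: 'I_n] :\ i|%:R = n%:R - 1 :> R.
    have e' : (#|[set: 'I_n] :\ i| + 1 = n)%N.
      have hh := cardsD1 i [set: 'I_n]. rewrite in_setT cardsT card_ord /= in hh. by rewrite addnC -hh.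
    have -> : n%:R = (#|[set: 'I_n] :\ i| + 1)%:R :> R by rewrite e'.
    by rewrite natrD addrK.
  ring.
rewrite (eq_bigr _ (fun i _ => e i)) sumrB sumr_const -mulr_sumr -hU' card_ord.
have -> : (n%:R^-1 * (A * ((Vv x')%:R + 1) + (n%:R - 1))) *+ n = A * ((Vv x')%:R + 1) + (n%:R - 1).
  by rewrite -mulr_natr mulrAC mulVf // mul1r.
have hA : A * (4 * Qn ^ 2)%:R^-1 = n%:R.
  rewrite /A /Acoef natrM mulrAC mulfV ?mul1r // pnatr_eq0 muln_eq0 expn_eq0; apply/negP => /orP[] //.
  by move=> /andP[/eqP hq _]; move: hQ; rewrite hq.
have hA0 : 0 <= A by rewrite /A /Acoef ler0n.
have hAs : n%:R <= A * hr n x' x' [set: 'I_n] by rewrite -hA; apply: ler_wpM2l.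
rewrite (hr_end #|F| (negbT hend)).
have hV : ((Vv x')%:R + ((f y < f x)%R)%:R <= (Vv x)%:R :> R).
  rewrite -natrD ler_nat /x'.
  case: (ltgtP (f y) (f x)) => hcc.
  - by rewrite addn1; apply: V_lt.
  - by rewrite addn0.
  - by rewrite addn0 /Vv hcc.
have hF0 : 0 <= #|F|%:R :> R by [].
have : A * ((Vv x')%:R + ((f y < f x)%R)%:R) <= A * (Vv x)%:R by apply: ler_wpM2l.
move: hAs; set H := hr n x' x' _; set W := (Vv x')%:R; set b := ((f y < f x)%R)%:R; set V := (Vv x)%:R.
move=> hAs hAV.
have : A * (W + 1) + (n%:R - 1) - A * H <= A * (V + 1 - b) + #|F|%:R - 1.
  have e1 : A * (W + 1) = A * W + A by ring.
  have e2 : A * (V + 1 - b) = A * V + A - A * b by ring.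
  have e3 : A * (W + b) = A * W + A * b by ring.
  rewrite e3 in hAV; rewrite e1 e2; lra.
by [].
Qed.

Lemma kernel_ge0 (s s' : state n) : 0 <= kernel p s s'.
Proof.
case: s => [[x y] F]; rewrite /kernel /=; case: ifP => _;
by apply: sumr_ge0 => i _; rewrite mulr_ge0 ?invr_ge0 ?ler0n.
Qed.

Lemma alive_ge0 k (s : state n) : 0 <= alive p k s.
Proof.
elim: k s => [|k IH] s /=.
  by rewrite mulr_ge0 ?ler0n // /init_dist mulr_ge0 ?invr_ge0 ?ler0n.
rewrite mulr_ge0 ?ler0n //; apply: sumr_ge0 => s0 _.
by rewrite mulr_ge0 ?IH ?kernel_ge0.
Qed.

Lemma kernel_supp (s s' : state n) : kernel p s s' != 0 -> s'.1.1 = s.1.1 \/ s'.1.1 = s.1.2.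
Proof.
case: s => [[x y] F] /= hK.
case: (eqVneq s'.1.1 x) => [|h1]; first by left.
case: (eqVneq s'.1.1 y) => [|h2]; first by right.
exfalso; move/eqP: hK; apply.
rewrite /kernel /=; case: ifP => _; apply: big1 => i _.
  have -> : (s' == (x, flip y i, F :\ i)) = false.
    by apply/negbTE/negP => /eqP e; move: h1; rewrite e eqxx.
  by rewrite mulr0.
have -> : (s' == ((if f y <= f x then y else x), flip (if f y <= f x then y else x) i, [set: 'I_n] :\ i)) = false.
  apply/negbTE/negP => /eqP e; move: h1 h2; rewrite e /=; case: ifP => _; by rewrite eqxx.
by rewrite mulr0.
Qed.

Lemma alive_nz k (s : state n) : alive p k s != 0 -> ~~ optimal p s.1.1 && ~~ optimal p s.1.2.
Proof.
elim: k s => [|k IH] s /=.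
  case hy: (optimal p s.1.2); first by rewrite mul0r eqxx.
  rewrite /init_dist; case hi: ((s.1.1 == s.1.2) && (s.2 == set0)); last by rewrite mul0r mulr0 eqxx.
  by case/andP: hi => /eqP -> _; rewrite hy.
case hy: (optimal p s.1.2); first by rewrite mul0r eqxx.
rewrite mul1r andbT => hs.
case: (pickP (fun s0 : state n => alive p k s0 * kernel p s0 s != 0)) => [s0 /= h0|hall]; last first.
  by move/eqP: hs; case; apply: big1 => s0 _; move: (hall s0) => /= /negbFE /eqP.
have ha : alive p k s0 != 0 by apply: contraNneq h0 => ->; rewrite mul0r.
have hk : kernel p s0 s != 0 by apply: contraNneq h0 => ->; rewrite mulr0.
case/andP: (IH s0 ha) => h1 h2.
by case: (kernel_supp hk) => ->.
Qed.

Lemma gg_ge0 Qn (s : state n) : 0 <= gg Qn s.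
Proof.
case: s => [[x y] F] /=; apply: addr_ge0 => //; apply: mulr_ge0; first by rewrite /Acoef ler0n.
have := hr_le1 #|F| x y F; have : 0 <= (Vv x)%:R :> R by []. lra.
Qed.

Lemma gg_le Qn (hn2 : (2 <= n)%N) (s : state n) :
  gg Qn s <= Acoef Qn * (3 * (n - 1) + 1)%:R + n%:R.
Proof.
case: s => [[x y] F] /=; apply: lerD.
  apply: ler_wpM2l; first by rewrite /Acoef ler0n.
  have := hr_ge0 #|F| x y F.
  have : (Vv x)%:R <= (3 * (n - 1))%:R :> R by rewrite ler_nat V_bound.
  rewrite natrD; lra.
by rewrite ler_nat -[X in (_ <= X)%N]card_ord max_card.
Qed.

Definition aa Qn k := \sum_(s : state n) alive p k s * gg Qn s.

Lemma aa_step (he0 : 0 < eps) (he1 : eps < 1/3) (hn : (4 <= n)%N) (hev : ~~ odd n)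
  Qn (hQ : (2 <= Qn)%N) (hQw : (1/3 + eps/2) / Qn%:R < 1/6 - eps/2) k :
  aa Qn k.+1 + \sum_(s : state n) alive p k s <= aa Qn k.
Proof.
have E : aa Qn k.+1 = \sum_(s : state n) alive p k s *
    \sum_(s' : state n) ((~~ optimal p s'.1.2)%:R * kernel p s s' * gg Qn s').
  rewrite /aa /=.
  under eq_bigr do rewrite mulr_sumr mulr_suml.
  rewrite exchange_big; apply: eq_bigr => s _; rewrite mulr_sumr; apply: eq_bigr => s' _.
  ring.
rewrite E -big_split /aa; apply: ler_sum => s _.
rewrite /=.
case: (eqVneq (alive p k s) 0) => [->|hnz]; first by rewrite !mul0r addr0.
case/andP: (alive_nz hnz) => hx hy.
case: s hnz hx hy => [[x y] F] hnz hx hy.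
have hd := drift he0 he1 hn hev hQ hQw F hx hy.
have hd' : \sum_(s' : state n) (~~ optimal p s'.1.2)%:R * kernel p (x, y, F) s' * gg Qn s' <= gg Qn (x, y, F) - 1.
  apply: le_trans hd; apply: ler_sum => s' _.
  rewrite -mulrA; case: (~~ optimal p s'.1.2); rewrite ?mul1r // mul0r.
  by rewrite mulr_ge0 ?kernel_ge0 ?gg_ge0.
have ha := alive_ge0 k (x, y, F).
have : alive p k (x, y, F) * (\sum_(s' : state n) (~~ optimal p s'.1.2)%:R * kernel p (x, y, F) s' * gg Qn s')
   <= alive p k (x, y, F) * (gg Qn (x, y, F) - 1) by apply: ler_wpM2l.
rewrite mulrBr mulr1; lra.
Qed.

Lemma aa_tele (he0 : 0 < eps) (he1 : eps < 1/3) (hn : (4 <= n)%N) (hev : ~~ odd n)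
  Qn (hQ : (2 <= Qn)%N) (hQw : (1/3 + eps/2) / Qn%:R < 1/6 - eps/2) M :
  \sum_(i < M) \sum_(s : state n) alive p i s <= aa Qn 0 - aa Qn M.
Proof.
elim: M => [|M IH]; first by rewrite big_ord0 subrr.
rewrite big_ord_recr /=.
have := aa_step he0 he1 hn hev hQ hQw M.
lra.
Qed.

Lemma aa_ge0 Qn k : 0 <= aa Qn k.
Proof. by apply: sumr_ge0 => s _; rewrite mulr_ge0 ?alive_ge0 ?gg_ge0. Qed.

Lemma sum_init : \sum_(s : state n) init_dist R s = 1.
Proof.
rewrite /init_dist -mulr_suml.
have -> : \sum_(s : state n) (((s.1.1 == s.1.2) && (s.2 == set0) : nat)%:R : R) =
          \sum_(xy : bits n * bits n) \sum_(F : {set 'I_n}) (((xy.1 == xy.2) && (F == set0) : nat)%:R : R).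
  by rewrite pair_bigA.
rewrite (eq_bigr (fun xy : bits n * bits n => ((xy.1 == xy.2) : nat)%:R)); last first.
  move=> [a b] _ /=; rewrite (bigD1 set0) //= eqxx andbT big1 ?addr0 // => F /negbTE ->.
  by rewrite andbF.
rewrite -(pair_bigA _ (fun a b => ((a == b : bool) : nat)%:R)) /=.
rewrite (eq_bigr (fun _ => 1)); last first.
  move=> a _; rewrite (bigD1 a) //= eqxx big1 ?addr0 // => b; rewrite eq_sym => /negbTE ->.
  by [].
rewrite sumr_const card_ffun card_bool card_ord.
by rewrite mulfV // pnatr_eq0 expn_eq0.
Qed.

Lemma runtime_bound (he0 : 0 < eps) (he1 : eps < 1/3) (hn : (4 <= n)%N) (hev : ~~ odd n)
  Qn (hQ : (2 <= Qn)%N) (hQw : (1/3 + eps/2) / Qn%:R < 1/6 - eps/2) m :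
  runtime_partial p m <= 1 + (Acoef Qn * (3 * (n - 1) + 1)%:R + n%:R).
Proof.
have hn2 : (2 <= n)%N by lia.
set G := Acoef Qn * (3 * (n - 1) + 1)%:R + n%:R.
have hG : 0 <= G by rewrite /G addr_ge0 ?mulr_ge0 // /Acoef ler0n.
case: m => [|M].
  by rewrite /runtime_partial big_ord0 addr_ge0.
rewrite /runtime_partial big_ord_recl /=.
have -> : \sum_(i < M) surv p (lift ord0 i) = \sum_(i < M) \sum_(s : state n) alive p i s.
  by apply: eq_bigr => i _; rewrite /surv lift0.
have ht := aa_tele he0 he1 hn hev hQ hQw M.
have h0 := aa_ge0 Qn M.
have ha0 : aa Qn 0 <= G.
  rewrite /aa; apply: le_trans (_ : \sum_(s : state n) init_dist R s * G <= _).
    apply: ler_sum => s _ /=.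
    have hi : 0 <= init_dist R s by rewrite /init_dist mulr_ge0 ?invr_ge0 ?ler0n.
    have hg := gg_le Qn hn2 s; have hg0 := gg_ge0 Qn s.
    case: (~~ optimal p s.1.2); rewrite ?mul1r ?mul0r.
      by apply: ler_pM.
    by rewrite mulr_ge0.
  by rewrite -mulr_suml sum_init mul1r.
rewrite /surv; lra.
Qed.

End S.

Lemma subr_gt0_helper (R : realType) (a b : R) : a < b -> 0 < b - a.
Proof. by rewrite subr_gt0. Qed.

Unset Implicit Arguments.

Theorem corollary1 (R : realType) (eps : R) :
  0 < eps -> eps < 1 / 3 ->
  exists (C : R) (N0 : nat), 0 < C /\
    forall n : nat, ~~ odd n -> (N0 <= n)%N ->
      forall m : nat, runtime_partial (@pstar R n eps) m <= C * (n ^ 2)%:R.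
Proof.
move=> he0 he1.
set X := (1/3 + eps/2) / (1/6 - eps/2).
have hd : 0 < 1/6 - eps/2 by lra.
have hX : 0 <= X by rewrite /X divr_ge0 //; lra.
set Qn := (Num.Def.archi_bound X).+2.
have hQ : (2 <= Qn)%N by [].
have hXQ : X < Qn%:R.
  apply: lt_le_trans (archi_boundP hX) _; rewrite ler_nat /Qn; lia.
have hQ0 : 0 < Qn%:R :> R by rewrite ltr0n.
have hQw : (1/3 + eps/2) / Qn%:R < 1/6 - eps/2.
  rewrite ltr_pdivrMr //.
  have e : X * (1/6 - eps/2) = 1/3 + eps/2 by rewrite /X divfK // gt_eqF.
  have := mulr_gt0 (subr_gt0_helper hXQ) hd.
  rewrite mulrBl e; lra.
exists ((12 * Qn ^ 2 + 1)%:R); exists 4%N; split; first by rewrite ltr0n addn1.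
move=> n hev hn m.
apply: le_trans (runtime_bound he0 he1 hn hev hQ hQw m) _.
rewrite /Acoef.
have e1 : (1 + (4 * Qn ^ 2 * n * (3 * (n - 1) + 1) + n))%:R =
   (1 + ((4 * Qn ^ 2 * n)%:R * (3 * (n - 1) + 1)%:R + n%:R) : R).
  by rewrite natrD (natrD _ _ n) (natrM _ (4 * Qn ^ 2 * n)).
have e2 : ((12 * Qn ^ 2 + 1) * n ^ 2)%:R = (12 * Qn ^ 2 + 1)%:R * (n ^ 2)%:R :> R by rewrite (natrM _ (12 * Qn ^ 2 + 1)).
have hnat : (1 + (4 * Qn ^ 2 * n * (3 * (n - 1) + 1) + n) <= (12 * Qn ^ 2 + 1) * n ^ 2)%N.
  have : (1 <= Qn ^ 2)%N by rewrite expn_gt0.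
  move: (Qn ^ 2)%N => q2 hq.
  nia.
rewrite -e1 -e2 ler_nat.
by [].
Qed.
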